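(* Let $H=(T_1,\dots,T_n,p_1,\dots,p_n)$ be a strategic game. For every ordinal $\alpha$, property $\mathbf C(\alpha)$ implies property $\mathbf D(\alpha)$.
   Context: A restriction of $H$ is $G=(S_1,\dots,S_n)$ with $S_i\subseteq T_i$ (possibly empty), ordered componentwise. For $s_i,s_i'\in T_i$, $s_i'\succ_G s_i$ means $p_i(s_i',s_{-i})>p_i(s_i,s_{-i})$ for all $s_{-i}\in\prod_{j\ne i}S_j$ (vacuous if this product is empty). $LS(G):=(S_1',\dots,S_n')$ with $S_i':=\{s_i\in T_i\mid\neg\exists s_i'\in S_i:\ s_i'\succ_G s_i\}$, and $\overline{LS}(G):=LS(G)\cap G$. Iterations: $T^0:=H$, $T^{\alpha+1}:=T(T^\alpha)$, $T^\beta:=\bigcap_{\alpha<\beta}T^\alpha$ for limit $\beta$. $R$ is a relaxation of $T$ if for all ordinals $\alpha$: (1) $T(R^\alpha)\subseteq R(R^\alpha)$; (2) if $T(R^\alpha)\subseteq R^\alpha$ then $R(R^\alpha)\subseteq R^\alpha$; (3) if $R(R^\alpha)=R^\alpha$ then $T(R^\alpha)=R^\alpha$. Property $\mathbf C(\alpha)$: for every relaxation $R$ of $\overline{LS}$, every $i$ and every $s_i\in T_i$: if some $s_i'\in T_i$ has $s_i'\succ_{R^\alpha}s_i$, then there is $s_i^*\in T_i$ with $s_i^*\succ_{R^\alpha}s_i$ and no $s_i'\in T_i$ with $s_i'\succ_{R^\alpha}s_i^*$. Property $\mathbf D(\alpha)$: for every relaxation $R$ of $\overline{LS}$, writing $R^\alpha=(S_1,\dots,S_n)$,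 every $i$ and every $s_i\in T_i$: if some $s_i'\in T_i$ has $s_i'\succ_{R^\alpha}s_i$, then some $s_i^*\in S_i$ has $s_i^*\succ_{R^\alpha}s_i$. *)

(* Defs.v *)
From mathcomp Require Import ssreflect ssrfun ssrbool eqtype ssrnat fintype.
From Stdlib Require Import Reals.




(* ---------- "ordinals": elements of well-ordered types ---------- *)
Record wellorder := WellOrder {
  wo_car :> Type;
  wo_lt : wo_car -> wo_car -> Prop;
  wo_irrefl : forall a, ~ wo_lt a a;
  wo_trans : forall a b c, wo_lt a b -> wo_lt b c -> wo_lt a c;
  wo_total : forall a b, wo_lt a b \/ a = b \/ wo_lt b a;
  wo_wf : well_founded wo_lt
}.

Arguments wo_lt {w}.

Section Game.
Variable n : nat.
Variable T : 'I_n -> Type.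
Variable p : forall i : 'I_n, (forall j, T j) -> R.

Definition restriction := forall i : 'I_n, T i -> Prop.

Definition full_game : restriction := fun _ _ => True.

Definition rsub (G G' : restriction) : Prop := forall i x, G i x -> G' i x.
Definition rcap (G G' : restriction) : restriction := fun i x => G i x /\ G' i x.

Definition join (i : 'I_n) (x : T i) (s : forall j, j <> i -> T j) (j : 'I_n) : T j :=
  match @eqP _ i j with
  | ReflectT e => eq_rect i T x j e
  | ReflectF ne => s j (fun e => ne (esym e))
  end.

Definition sdom (G : restriction) (i : 'I_n) (s' s : T i) : Prop :=
  forall smi : forall j, j <> i -> T j,
    (forall j (h : j <> i), G j (smi j h)) ->
    (p i (join i s smi) < p i (join i s' smi))%R.

Definition LS (G : restriction) : restriction :=
  fun i x => ~ exists s', G i s' /\ sdom G i s' x.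

Definition LSbar (G : restriction) : restriction := rcap (LS G) G.

Definition operator := restriction -> restriction.

(* F is the transfinite iteration of R along the well-order W:
   F 0 = H, F (a+1) = R (F a), F b = intersection of F a (a<b) for limit b *)
Definition is_iteration (W : wellorder) (Op : operator) (F : W -> restriction) : Prop :=
  forall a : W,
    ((forall b, ~ wo_lt b a) -> F a = full_game) /\
    (forall b, wo_lt b a -> (forall c, ~ (wo_lt b c /\ wo_lt c a)) ->
        F a = Op (F b)) /\
    ((exists b, wo_lt b a) ->
     (forall b, wo_lt b a -> exists c, wo_lt b c /\ wo_lt c a) ->
        F a = (fun i x => forall b, wo_lt b a -> F b i x)).

Definition relaxation (Op Tp : operator) : Prop :=
  forall (W : wellorder) (F : W -> restriction), is_iteration W Op F ->
  forall a : W,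
    rsub (Tp (F a)) (Op (F a)) /\
    (rsub (Tp (F a)) (F a) -> rsub (Op (F a)) (F a)) /\
    (Op (F a) = F a -> Tp (F a) = F a).

Definition prop_C (W : wellorder) (alpha : W) : Prop :=
  forall Op : operator, relaxation Op LSbar ->
  forall F, is_iteration W Op F ->
  forall (i : 'I_n) (s : T i),
    (exists s', sdom (F alpha) i s' s) ->
    exists sst, sdom (F alpha) i sst s /\ ~ exists s', sdom (F alpha) i s' sst.

Definition prop_D (W : wellorder) (alpha : W) : Prop :=
  forall Op : operator, relaxation Op LSbar ->
  forall F, is_iteration W Op F ->
  forall (i : 'I_n) (s : T i),
    (exists s', sdom (F alpha) i s' s) ->
    exists sst, F alpha i sst /\ sdom (F alpha) i sst s.

End Game.

(* Main.v *)
Require Import Defs.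
From mathcomp Require Import ssreflect ssrfun ssrbool eqtype ssrnat fintype.
From Stdlib Require Import Reals Classical.

Section Aux.
Variable n : nat.
Variable T : 'I_n -> Type.
Variable p : forall i : 'I_n, (forall j, T j) -> R.
Variable W : wellorder.
Variable Op : operator n T.
Hypothesis HR : relaxation n T Op (LSbar n T p).
Variable F : W -> restriction n T.
Hypothesis HF : is_iteration n T W Op F.

Lemma sdom_mono (G G' : restriction n T) i s' s :
  rsub n T G G' -> sdom n T p G' i s' s -> sdom n T p G i s' s.
Proof. move=> Hs Hd smi Hm; apply: Hd => j h; apply: Hs; exact: Hm. Qed.

Lemma cases3 (a : W) :
  (forall b, ~ wo_lt b a) \/
  (exists b, wo_lt b a /\ forall c, ~ (wo_lt b c /\ wo_lt c a)) \/
  ((exists b, wo_lt b a) /\ forall b, wo_lt b a -> exists c, wo_lt b c /\ wo_lt c a).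
Proof.
case: (classic (exists b, wo_lt b a)) => [Hex|Hno]; last first.
  left => b Hb; apply: Hno; by exists b.
case: (classic (exists b, wo_lt b a /\ forall c, ~ (wo_lt b c /\ wo_lt c a))) => [H|H].
  by right; left.
right; right; split => // b Hb.
apply: NNPP => Hn; apply: H; exists b; split => // c Hc; apply: Hn; by exists c.
Qed.

Lemma step_sub b : rsub n T (Op (F b)) (F b).
Proof.
have [_ [H2 _]] := HR W F HF b.
apply: H2 => i x [_ ?]; done.
Qed.

Lemma decr : forall a b, wo_lt b a -> rsub n T (F a) (F b).
Proof.
apply: (well_founded_ind (wo_wf W)) => a IH b Hba.
have [H0 [Hs Hl]] := HF a.
case: (cases3 a) => [Hz|[[b0 [Hb0 Hn]]|[Hex Hall]]].
- by case: (Hz b).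
- rewrite (Hs b0 Hb0 Hn).
  case: (wo_total W b b0) => [Hlt|[Heq|Hgt]].
  + move=> i x Hx; apply: (IH b0 Hb0 b Hlt); exact: step_sub.
  + subst; exact: step_sub.
  + by case: (Hn b).
- rewrite (Hl Hex Hall) => i x Hx; exact: Hx.
Qed.

Lemma undom_in : forall a i x,
  (~ exists s', sdom n T p (F a) i s' x) -> F a i x.
Proof.
apply: (well_founded_ind (wo_wf W)) => a IH i x Hu.
have [H0 [Hs Hl]] := HF a.
case: (cases3 a) => [Hz|[[b0 [Hb0 Hn]]|[Hex Hall]]].
- by rewrite (H0 Hz).
- have Hsub := @decr a b0 Hb0 : rsub n T (F a) (F b0).
  have Hu' : ~ exists s', sdom n T p (F b0) i s' x.
    move=> [s' Hd]; apply: Hu; exists s'; exact: (sdom_mono _ _ _ _ _ Hsub Hd).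
  have [H1 _] := HR W F HF b0.
  rewrite (Hs b0 Hb0 Hn); apply: H1; split.
  + move=> [s' [_ Hd]]; apply: Hu'; by exists s'.
  + exact: IH.
- rewrite (Hl Hex Hall) => b Hb.
  apply: IH => // -[s' Hd]; apply: Hu; exists s'; exact: (sdom_mono _ _ _ _ _ (@decr a b Hb) Hd).
Qed.
End Aux.

Theorem mainTheorem9 (n : nat) (T : 'I_n -> Type)
    (p : forall i : 'I_n, (forall j, T j) -> R)
    (W : wellorder) (alpha : W) :
  prop_C n T p W alpha -> prop_D n T p W alpha.
Proof.
move=> HC Op HR F HF i s Hex.
have [sst [Hd Hu]] := HC Op HR F HF i s Hex.
exists sst; split => //; exact: (@undom_in n T p W Op HR F HF alpha i sst Hu).
Qed.
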